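(* Fix an integer base $B\ge 2$. Assume Dickson's conjecture holds. Then for every positive integer $t$ there exists a positive integer $N$ such that $N, N+1, \ldots, N+t-1$ are all economical base $B$.
   Context: For a positive integer $n$, $\delta(n)$ is the number of digits of $n$ in base $B$, i.e. $\delta(n)=k$ iff $B^{k-1}\le n<B^k$. Define $\delta'(1)=0$ and $\delta'(a)=\delta(a)$ for $a>1$. If $n=\prod_{i} p_i^{a_i}$ is the prime power factorisation, set $\phi(n)=\sum_i \big(\delta(p_i)+\delta'(a_i)\big)$ (with $\phi(1)=0$), and $h(n)=\delta(n)-\phi(n)$. $n$ is economical if $h(n)\ge 0$. Dickson's conjecture: for any finite family of linear functions $f_i(x)=a_i x+b_i$ ($i=1,\dots,s$) with integers $a_i\ge1$, $b_i$, if there is no integer $m>1$ dividing $f_1(x)\cdots f_s(x)$ for every integer $x$, then there are infinitely many positive integers $x$ for which $f_1(x),\dots,f_s(x)$ are all prime. *)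

(* Defs.v *)
From mathcomp Require Import all_boot all_order all_algebra.
From mathcomp Require Import intdiv.
Set Implicit Arguments. Unset Strict Implicit. Unset Printing Implicit Defensive.
Import Order.TTheory GRing.Theory Num.Theory.

(* delta B n : number of base-B digits of n >= 1, i.e. the k with
   B^(k-1) <= n < B^k.  For B >= 2, n >= 1 this is trunc_log B n + 1. *)
Definition delta (B n : nat) : nat := (trunc_log B n).+1.

Definition delta' (B a : nat) : nat := if a == 1 then 0 else delta B a.

Definition phi (B n : nat) : nat :=
  \sum_(p <- primes n) (delta B p + delta' B (logn p n)).

Definition economical (B n : nat) : Prop := phi B n <= delta B n.

Local Open Scope ring_scope.
Definition lin_eval (f : int * int) (x : int) : int := f.1 * x + f.2.

Definition int_prime (z : int) : Prop := exists2 p : nat, prime p & z = Posz p.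

Definition Dickson_conjecture : Prop :=
  forall fs : seq (int * int),
    all (fun f => 1 <= f.1)%R fs ->
    (~ exists m : int, (1 < m)%R /\
         forall x : int, (m %| \prod_(f <- fs) lin_eval f x)%Z) ->
    forall M : nat, exists x : nat, (M < x)%N /\
      forall f, f \in fs -> int_prime (lin_eval f (Posz x)).

(* Main.v *)
Require Import Defs.
Set Warnings "-notation-overridden,-ambiguous-paths".
From mathcomp Require Import all_boot all_order all_algebra.
From mathcomp Require Import zify ring.

Lemma delta_mono B m n : m <= n -> delta B m <= delta B n.
Proof. by move=> h; rewrite /delta ltnS leq_trunc_log. Qed.

Lemma deltaM B m n : 1 < B -> 0 < m -> 0 < n ->
  delta B m + delta B n <= (delta B (m * n)).+1.
Proof.
move=> hB hm hn; rewrite /delta addSn !ltnS addnS ltnS.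
apply: trunc_log_max => //; rewrite expnD.
by apply: leq_mul; apply: trunc_logP.
Qed.

Lemma delta'_le B E : 1 < B -> 0 < E -> delta' B E <= E.
Proof.
move=> hB hE; rewrite /delta'; case: eqP => // _; rewrite /delta.
exact: (leq_trans (ltn_expl _ hB) (trunc_logP hB hE)).
Qed.

Lemma delta_pexp B p E : 1 < B -> B * B <= p -> (E.*2).+1 <= delta B (p ^ E).
Proof.
move=> hB hp; rewrite /delta ltnS; apply: trunc_log_max => //.
rewrite -muln2 mulnC expnM; case: E => [|E]; first by [].
by rewrite leq_exp2r // expnS expn1.
Qed.

Lemma logn_coprime0 p m n : p \in primes m -> coprime m n -> logn p n = 0.
Proof.
move=> pm cmn; apply/eqP; rewrite eqn0Ngt logn_gt0; apply/negP => pn.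
move: pm pn; rewrite !mem_primes => /and3P[pp _ dm] /and3P[_ _ dn].
have : p %| gcdn m n by rewrite dvdn_gcd dm dn.
rewrite (eqP cmn) => /(dvdn_leq (isT : 0 < 1)).
by rewrite leqNgt prime_gt1.
Qed.

Arguments logn_coprime0 {p m n}.

Lemma phiM B m n : 0 < m -> 0 < n -> coprime m n ->
  phi B (m * n) = phi B m + phi B n.
Proof.
move=> hm hn c; rewrite /phi.
have pe : perm_eq (primes (m * n)) (primes m ++ primes n).
  apply: uniq_perm; first exact: primes_uniq.
    rewrite cat_uniq !primes_uniq /= andbT; apply/hasPn => p pn; apply/negP => pm.
    by move: pn; rewrite -logn_gt0 (logn_coprime0 pm c).
  by move=> p; rewrite mem_cat primesM.
rewrite (perm_big _ pe) big_cat /=; congr (_ + _); apply: eq_big_seq => p pin.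
  by rewrite lognM // (logn_coprime0 pin c) addn0.
rewrite lognM // (logn_coprime0 pin _) //; by rewrite coprime_sym.
Qed.

Lemma phi_prime B q : prime q -> phi B q = delta B q.
Proof.
move=> pq; rewrite /phi primes_prime // big_seq1.
by rewrite logn_prime // eqxx addn0.
Qed.

Lemma phi_pexp B p E : prime p -> 0 < E -> phi B (p ^ E) = delta B p + delta' B E.
Proof.
move=> pp hE; rewrite /phi primesX // primes_prime // big_seq1 pfactorK //.
Qed.

Lemma uniq_root p A b x y t : prime p -> ~~ (p %| A) -> t < p -> x <= y -> y <= t ->
  p %| A * x + b -> p %| A * y + b -> x = y.
Proof.
move=> pp nA tp xy yt hx hy.
have e : A * y + b = (A * x + b) + A * (y - x).
  rewrite -addnA [b + _]addnC addnA -mulnDr subnKC //.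
move: hy; rewrite e dvdn_addr // Euclid_dvdM // (negbTE nA) /= => d.
have : y - x = 0.
  apply/eqP; apply: contraT; rewrite -lt0n => h.
  have := dvdn_leq h d; lia.
lia.
Qed.

Arguments uniq_root {p A b x y t}.

Lemma good_x t (a b : nat -> nat) p : prime p ->
  (forall i, i < t -> coprime (a i) (b i)) -> (forall i, i < t -> t`! %| a i) ->
  exists x, x <= t /\ forall i, i < t -> ~~ (p %| a i * x + b i).
Proof.
move=> pp cab fa.
case: (boolP [exists x : 'I_t.+1, [forall i : 'I_t, ~~ (p %| a i * x + b i)]]).
  move=> /existsP [x /forallP hx]; exists x; split; first by rewrite -ltnS ltn_ord.
  by move=> i hi; exact: (hx (Ordinal hi)).
rewrite negb_exists => /forallP hne.
have : forall x : 'I_t.+1, exists i : 'I_t, p %| a i * x + b i.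
  move=> x; move: (hne x); rewrite negb_forall => /existsP [i]; rewrite negbK.
  by exists i.
case/fin_all_exists => g hg.
have ginj : injective g.
  move=> x y gxy; apply: val_inj => /=.
  have hx := hg x; have hy := hg y; rewrite -gxy in hy.
  set i := g x in hx hy.
  have hi := ltn_ord i.
  case: (boolP (p %| a i)) => pa.
    move: hx; rewrite dvdn_addr ?dvdn_mulr // => pb.
    have : p %| gcdn (a i) (b i) by rewrite dvdn_gcd pa pb.
    by rewrite (eqP (cab _ hi)) Euclid_dvd1.
  have tp : t < p.
    rewrite ltnNge; apply/negP => pt; move/negP: pa; apply.
    apply: dvdn_trans (fa _ hi); apply: dvdn_fact; rewrite prime_gt0 //.
  have xt : (x : nat) <= t by rewrite -ltnS ltn_ord.
  have yt : (y : nat) <= t by rewrite -ltnS ltn_ord.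
  case/orP: (leq_total x y) => h.
    exact: (uniq_root pp pa tp h yt hx hy).
  by apply/esym; exact: (uniq_root pp pa tp h xt hy hx).
by have := leq_card _ ginj; rewrite !card_ord ltnn.
Qed.

Lemma dickson_nat t (a b : nat -> nat) : Dickson_conjecture ->
  (forall i, i < t -> 0 < a i) ->
  (forall i, i < t -> coprime (a i) (b i)) -> (forall i, i < t -> t`! %| a i) ->
  forall M, exists x, M < x /\ forall i, i < t -> prime (a i * x + b i).
Proof.
move=> D apos cab fa M.
pose fs := [seq ((Posz (a i)), (Posz (b i))) | i <- iota 0 t].
have hall : all (fun f => (1 <= f.1)%R) fs.
  apply/allP => f /mapP [i hi ->] /=; rewrite lez_nat apos //.
  by move: hi; rewrite mem_iota.
have hprod : forall x : nat, (\prod_(f <- fs) lin_eval f (Posz x))%R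
    = Posz (\prod_(i <- iota 0 t) (a i * x + b i)).
  move=> x; rewrite big_map (big_morph Posz PoszM (erefl _)).
  by apply: eq_bigr => i _; rewrite /lin_eval /= PoszD PoszM.
have nofix : ~ exists m : int, (1 < m)%R /\
         forall x : int, (m %| (\prod_(f <- fs) lin_eval f x)%R)%Z.
  move=> [m [m1 hm]]; case: m m1 hm => [n|n] // m1 hm.
  rewrite ltz_nat in m1.
  have [x [xt hx]] := @good_x _ _ _ _ (pdiv_prime m1) cab fa.
  move: (hm (Posz x)); rewrite hprod dvdzE /= => dn.
  have := dvdn_trans (pdiv_dvd n) dn.
  rewrite Euclid_dvd_prod ?pdiv_prime // big_has => /hasP [i].
  rewrite mem_iota add0n => /andP [_ hi].
  by rewrite (negbTE (hx i hi)).
have [x [Mx hx]] := D fs hall nofix M.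
exists x; split => // i hi.
have : ((Posz (a i)), (Posz (b i))) \in fs by apply: map_f; rewrite mem_iota add0n hi.
move/hx; case=> q pq; rewrite /lin_eval /= -PoszM -PoszD => [[->]] //.
Qed.

Lemma dvd_prod_ord n (m : nat -> nat) i : i < n -> m i %| \prod_(j < n) m j.
Proof. by move=> hi; rewrite (bigD1 (Ordinal hi)) //= dvdn_mulr. Qed.

Lemma crt n (m d : nat -> nat) :
  (forall i j, i < n -> j < n -> i != j -> coprime (m i) (m j)) ->
  (forall i, i < n -> coprime (d i) (m i)) -> (forall i, i < n -> 0 < m i) ->
  exists k, forall i, i < n -> m i %| 1 + d i * k.
Proof.
elim: n => [|n IH] hm hd hp; first by exists 0.
have [k hk] : exists k, forall i, i < n -> m i %| 1 + d i * k.
  apply: IH => [i j hi hj|i hi|i hi].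
  - by apply: hm; apply: ltnW.
  - by apply: hd; apply: ltnW.
  - by apply: hp; apply: ltnW.
pose Mp := \prod_(j < n) m j.
have cop : coprime (d n * Mp) (m n).
  rewrite coprimeMl hd //= /Mp.
  apply: (big_ind (fun y => coprime y (m n))).
  - exact: coprime1n.
  - by move=> x y hx hy; rewrite coprimeMl hx hy.
  - move=> j _; apply: hm; [exact: ltnW (ltn_ord j) | by [] | by rewrite neq_ltn ltn_ord].
have [u _ hu] := Bezoutl (d n * Mp) (hp n (ltnSn n)).
rewrite gcdnC (eqP cop) in hu.
pose X := 1 + d n * k.
exists (k + Mp * (u * X)) => i; rewrite ltnS leq_eqVlt => /orP [/eqP ->|hi].
  have -> : 1 + d n * (k + Mp * (u * X)) = X * (1 + u * (d n * Mp)) by rewrite /X; ring.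
  exact: dvdn_mull.
have -> : 1 + d i * (k + Mp * (u * X)) = (1 + d i * k) + Mp * (d i * u * X) by ring.
by rewrite dvdn_add ?hk // dvdn_mulr // dvd_prod_ord.
Qed.

Fixpoint Pseq (Q i : nat) : nat :=
  match i with 0 => sval (prime_above Q) | i'.+1 => sval (prime_above (Pseq Q i')) end.

Lemma Pseq_prime Q i : prime (Pseq Q i).
Proof. by case: i => [|i] /=; case: prime_above. Qed.

Lemma Pseq_incr Q i : Pseq Q i < Pseq Q i.+1.
Proof. by rewrite /=; case: prime_above. Qed.

Lemma Pseq_gt Q i : Q < Pseq Q i.
Proof.
elim: i => [|i IH]; first by rewrite /=; case: prime_above.
exact: ltn_trans IH (Pseq_incr Q i).
Qed.

Lemma Pseq_mono Q i j : i < j -> Pseq Q i < Pseq Q j.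
Proof.
elim: j => [|j IH] //; rewrite ltnS leq_eqVlt => /orP [/eqP ->|h].
  exact: Pseq_incr.
exact: ltn_trans (IH h) (Pseq_incr Q j).
Qed.

Lemma Pseq_inj Q i j : i != j -> Pseq Q i != Pseq Q j.
Proof.
rewrite !neq_ltn => /orP [] h.
  by rewrite (Pseq_mono _ _ _ h).
by rewrite (Pseq_mono _ _ _ h) orbT.
Qed.

Lemma ndvd_fact p n : prime p -> n < p -> ~~ (p %| n`!).
Proof.
move=> pp; elim: n => [|n IH] h; first by rewrite Euclid_dvd1.
rewrite factS Euclid_dvdM // negb_or IH ?andbT; last exact: ltnW.
apply/negP => /(dvdn_leq (ltn0Sn n)); rewrite leqNgt h.
by [].
Qed.

Lemma diff_contra p x y c : x < y -> y - x < p -> p %| x + c -> p %| y + c -> False.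
Proof.
move=> xy yp hx hy.
have e : y + c = (x + c) + (y - x) by lia.
move: hy; rewrite e dvdn_addr // => /(dvdn_leq _) h.
have : p <= y - x by apply: h; lia.
lia.
Qed.

Theorem mainTheorem6 (B : nat) (hB : 2 <= B) :
  Dickson_conjecture ->
  forall t : nat, 0 < t ->
  exists N : nat, 0 < N /\ forall i : nat, i < t -> economical B (N + i).
Proof.
move=> D t t0.
pose Q := t + B * B.
pose P := Pseq Q.
pose E := (\sum_(i < t) (phi B i.+1 + delta B (P i))).+1.
pose F := t`!.
pose Dd i := F * (F %/ i.+1).
have hP : forall i, prime (P i) by move=> i; apply: Pseq_prime.
have hPt : forall i, t < P i by move=> i; have := Pseq_gt Q i; rewrite /P /Q; lia.
have hPB : forall i, B * B <= P i by move=> i; have := Pseq_gt Q i; rewrite /P /Q; lia.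
have E0 : 0 < E by [].
have F0 : 0 < F by apply: fact_gt0.
have hiF : forall i, i < t -> i.+1 %| F by move=> i hi; apply: dvdn_fact.
have hDd : forall i, i < t -> i.+1 * Dd i = F * F.
  by move=> i hi; rewrite /Dd mulnCA [_.+1 * _]mulnC divnK // hiF.
have cPj : forall i j, 0 < j -> j <= t -> coprime (P i) j.
  move=> i j j0 jt; rewrite prime_coprime //; apply/negP => /(dvdn_leq j0).
  have := hPt i; lia.
have cPF : forall i, coprime (P i) F.
  by move=> i; rewrite prime_coprime // ndvd_fact.
have [k hk] : exists k, forall i, i < t -> P i ^ E %| 1 + Dd i * k.
  apply: crt => [i j hi hj ij|i hi|i hi].
  - rewrite coprime_pexpl // coprime_pexpr // prime_coprime // dvdn_prime2 //.
    exact: Pseq_inj.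
  - rewrite coprime_sym coprime_pexpl // /Dd coprimeMr cPF /=.
    exact: coprime_dvdr (dvdn_div (hiF i hi)) (cPF i).
  - by rewrite expn_gt0 prime_gt0.
pose b i := (1 + Dd i * k) %/ P i ^ E.
have hb : forall i, i < t -> P i ^ E * b i = 1 + Dd i * k.
  by move=> i hi; rewrite mulnC divnK // hk.
pose a i := Dd i * \prod_(j < t | (j : nat) != i) P j ^ E.
pose C := F * F * \prod_(j < t) P j ^ E.
have hC : forall i, i < t -> i.+1 * P i ^ E * a i = C.
  move=> i hi; rewrite /C (bigD1 (Ordinal hi)) //= /a.
  have -> : \prod_(j < t | j != Ordinal hi) P j ^ E
          = \prod_(j < t | (j : nat) != i) P j ^ E by apply: eq_bigl.
  rewrite -(hDd i hi); ring.
have C0 : 0 < C by rewrite /C !muln_gt0 F0 prodn_gt0 // => j; rewrite expn_gt0 prime_gt0.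
have apos : forall i, i < t -> 0 < a i.
  by move=> i hi; move: C0; rewrite -(hC i hi) muln_gt0 => /andP [_ ->].
have hPdiv : forall j, j < t -> P j %| j.+1 + F * F * k.
  move=> j hj; rewrite -(hDd j hj) (_ : j.+1 + j.+1 * Dd j * k = j.+1 * (1 + Dd j * k)); last by ring.
  apply: dvdn_mull; apply: dvdn_trans (hk j hj); exact: dvdn_exp.
have [x [Cx hq]] : exists x, C < x /\ forall i, i < t -> prime (a i * x + b i).
  apply: dickson_nat => // [i hi|i hi].
  - rewrite coprimeMl; apply/andP; split.
      have e : k * Dd i + 1 = P i ^ E * b i by rewrite hb // addnC mulnC.
      have : coprime (Dd i) (k * Dd i + 1) by rewrite /coprime gcdnMDl gcdn1.
      by rewrite e coprimeMr => /andP [].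
    apply: (big_ind (fun y => coprime y (b i))).
    + exact: coprime1n.
    + by move=> y z hy hz; rewrite coprimeMl hy hz.
    + move=> j ji; rewrite coprime_pexpl // prime_coprime //; apply/negP => pb.
      have h1 : P j %| i.+1 + F * F * k.
        rewrite -(hDd i hi) (_ : i.+1 + i.+1 * Dd i * k = i.+1 * (1 + Dd i * k)); last by ring.
        by apply: dvdn_mull; rewrite -hb // dvdn_mull.
      have h2 := hPdiv j (ltn_ord j).
      have hjt := ltn_ord j; have hPj := hPt j.
      case: (ltngtP i j) => [ij|ji'|eij].
      * by apply: (@diff_contra (P j) i.+1 j.+1 (F * F * k)) => //; lia.
      * by apply: (@diff_contra (P j) j.+1 i.+1 (F * F * k)) => //; lia.
      * by move: ji; rewrite eij eqxx.
  - by rewrite /a /Dd -mulnA dvdn_mulr.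
exists (C * x + 1 + F * F * k); split; first by lia.
move=> i hi.
set q := a i * x + b i.
have eN : C * x + 1 + F * F * k + i = i.+1 * P i ^ E * q.
  rewrite /q mulnDr mulnA (hC i hi) -[i.+1 * _ * b i]mulnA (hb i hi).
  rewrite (_ : i.+1 * (1 + Dd i * k) = i.+1 + (i.+1 * Dd i) * k); last by ring.
  rewrite (hDd i hi); lia.
have xq : x <= q by rewrite /q; have := apos i hi; nia.
have ciC : i.+1 * P i ^ E <= C by rewrite -(hC i hi) leq_pmulr // apos.
have PE0 : 0 < P i ^ E by rewrite expn_gt0 prime_gt0.
rewrite /economical eN phiM //; last first.
- rewrite coprime_sym prime_coprime ?hq //; apply/negP => /dvdn_leq.
  rewrite muln_gt0 PE0 /= => /(_ isT); lia.
- have := hq i hi; rewrite -/q => /prime_gt0 //.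
- by rewrite muln_gt0 PE0.
rewrite phiM //; last by rewrite coprime_pexpr // coprime_sym cPj.
rewrite phi_pexp // (@phi_prime B q (hq i hi)).
have hbud : phi B i.+1 + delta B (P i) < E.
  by rewrite /E ltnS (bigD1 (Ordinal hi)) //= leq_addr.
have hd' := @delta'_le B E hB E0.
have hPE := @delta_pexp B (P i) E hB (hPB i).
have q0 : 0 < q by lia.
have hM := @deltaM B (P i ^ E) q hB PE0 q0.
have hmono : delta B (P i ^ E * q) <= delta B (i.+1 * P i ^ E * q).
  by apply: delta_mono; rewrite -mulnA leq_pmull.
move: hPE; rewrite -muln2 => hPE. lia.
Qed.
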